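(* For a group $G$, the following are equivalent: (A) $G = S(G)$; (B) every subgroup of finite index of $G$ is exponential in $G$; (C) every finite quotient of $G$ is nilpotent; (D) every subgroup of finite index of $G$ is subnormal in $G$.
   Context: $S(G) := \{ x \in G : x^{|G:H|} \in H \text{ for every subgroup } H \leqslant G \text{ of finite index}\}$. A subgroup $H$ of finite index in $G$ is exponential in $G$ if $x^{|G:H|} \in H$ for every $x \in G$. $H$ is subnormal in $G$ if there is a finite chain $H = H_0 \lhd H_1 \lhd \dots \lhd H_r = G$. *)

(* Defs.v *)
From HB Require Import structures.
From mathcomp Require Import all_boot all_fingroup all_solvable.
Set Implicit Arguments. Unset Strict Implicit. Unset Printing Implicit Defensive.

Local Open Scope group_scope.

Section Defs.
Variable G : groupType.

Definition is_subgroup (H : G -> Prop) : Prop :=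
  H 1 /\ (forall x y, H x -> H y -> H (x * y)) /\ (forall x, H x -> H x^-1).

(* |G : H| = n : there are exactly n left cosets r H, i.e. a family of
   representatives r_0..r_{n-1} such that each x lies in exactly one r_i H. *)
Definition has_index (H : G -> Prop) (n : nat) : Prop :=
  exists reps : n.-tuple G, forall x : G, exists! i : 'I_n, H ((tnth reps i)^-1 * x).

Definition finite_index (H : G -> Prop) : Prop :=
  is_subgroup H /\ exists n, has_index H n.

Definition in_S (x : G) : Prop :=
  forall (H : G -> Prop) (n : nat), is_subgroup H -> has_index H n -> H (x ^+ n).

Definition exponential (H : G -> Prop) : Prop :=
  finite_index H /\ forall n, has_index H n -> forall x : G, H (x ^+ n).

Definition normal_in (H K : G -> Prop) : Prop :=
  is_subgroup H /\ is_subgroup K /\ (forall x, H x -> K x) /\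
  (forall x y, H x -> K y -> H (x ^ y)).

Inductive subnormal_in (H : G -> Prop) : Prop :=
  | subnormal_top : is_subgroup H -> (forall x, H x) -> subnormal_in H
  | subnormal_step (K : G -> Prop) : normal_in H K -> subnormal_in K -> subnormal_in H.

End Defs.

(* Main.v *)
Require Import Defs.
From HB Require Import structures.
From mathcomp Require Import all_boot all_fingroup all_solvable.
From Stdlib Require Import ClassicalEpsilon FunctionalExtensionality PropExtensionality.
From mathcomp Require Import zify.
Local Open Scope group_scope.

Lemma F1 (gT : finGroupType) (G : {group gT}) :
  (forall K : {group gT}, K \subset G -> forall x, x \in G -> x ^+ #|G : K| \in K) ->
  nilpotent G.
Proof.
move=> hexp.
have nP: forall p (P : {group gT}), p.-Sylow(G) P -> P <| G.
  move=> p P sylP.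
  have sPG := pHall_sub sylP.
  set N := 'N_G(P).
  have sNG : N \subset G by apply: subsetIl.
  have sPN : P \subset N by rewrite subsetI sPG normG.
  have nPN : P <| N by rewrite normalSG.
  have sylPN : p.-Sylow(N) P by apply: pHall_subl sylP.
  have p'm : p^'.-nat #|G : N|.
    by case/and3P: sylP => _ _ h; apply: pnat_dvd h; rewrite -(Lagrange_index sNG sPN) dvdn_mulr.
  have inP : forall y, y \in G -> p.-elt y -> y \in P.
    move=> y Gy py.
    have yN : y \in N.
      have co : coprime #|<[y]>| #|G : N| by apply: (pnat_coprime py p'm).
      rewrite -(expgK co (cycle_id y)).
      by rewrite groupX // hexp.
    by rewrite (mem_normal_Hall sylPN nPN yN).
  rewrite /normal sPG; apply/subsetP => z Gz; rewrite inE.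
  apply/subsetP => w /imsetP[y Py ->].
  apply: inP; first by rewrite groupJ // (subsetP sPG).
  by rewrite p_eltJ (mem_p_elt (pHall_pgroup sylP) Py).
apply: nilpotentS (Fitting_nil G).
rewrite -{1}(Sylow_gen G) gen_subG; apply/bigcupsP => P /SylowP[p pp sylP].
apply: Fitting_max; first exact: nP sylP.
exact: pgroup_nil (pHall_pgroup sylP).
Qed.

Lemma Fn (gT : finGroupType) (M G : {group gT}) x :
  M <| G -> x \in G -> x ^+ #|G : M| \in M.
Proof.
move=> nMG Gx.
have nM := normal_norm nMG.
have Nx : x \in 'N(M) by apply: (subsetP nM).
have : coset M (x ^+ #|G : M|) = 1.
  rewrite morphX //= -card_quotient //.
  by apply: expg_cardG; apply: mem_quotient.
move=> h; have : x ^+ #|G : M| \in 'ker (coset M).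
  by apply/kerP; [rewrite groupX | exact: h].
by rewrite ker_coset.
Qed.

Lemma F5 (gT : finGroupType) (K G : {group gT}) :
  K <|<| G -> forall x, x \in G -> x ^+ #|G : K| \in K.
Proof.
move: {2}#|G| (leqnn #|G|) => n.
elim: n G => [|n IH] G hG snK x Gx.
  by rewrite leqNgt cardG_gt0 in hG.
case: (subnormalEr snK) => [eKG | [M [snKM nMG prMG]]].
  have -> : #|G : K| = 1%N by rewrite eKG indexgg.
  by rewrite expg1 eKG.
have sKM := subnormal_sub snKM.
have sMG := proper_sub prMG.
rewrite -(Lagrange_index sMG sKM) expgM.
apply: IH => //; last exact: Fn.
by rewrite -ltnS; apply: leq_trans (proper_card prMG) hG.
Qed.

Definition pb (P : Prop) : bool := if excluded_middle_informative P then true else false.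
Lemma pbP (P : Prop) : reflect P (pb P).
Proof. by rewrite /pb; case: excluded_middle_informative => h; constructor. Qed.


Section Abs.
Context {G : groupType}.
Implicit Types H : G -> Prop.

Lemma sgH1 {H} : is_subgroup H -> H 1.
Proof. by case. Qed.
Lemma sgHM {H} : is_subgroup H -> forall x y, H x -> H y -> H (x * y).
Proof. by case=> _ []. Qed.
Arguments sgHM {H} _ {x y}.
Lemma sgHV {H} : is_subgroup H -> forall x, H x -> H x^-1.
Proof. by case=> _ []. Qed.
Arguments sgHM {H} _ {x y}. Arguments sgHV {H} _ {x}.
Arguments sgHV {H} _ {x}.

Lemma sgHcomb {H} : is_subgroup H -> forall r x y,
  H (r^-1 * x) -> H (r^-1 * y) -> H (x^-1 * y).
Proof.
move=> sH r x y hx hy.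
have := sgHM sH (sgHV sH hx) hy.
by rewrite invMg invgK -mulgA mulVKg.
Qed.

Lemma index_le {H n m} : is_subgroup H ->
  has_index H n -> has_index H m -> n <= m.
Proof.
move=> sH [r hr] [s hs].
have : forall i : 'I_n, exists j : 'I_m, H ((tnth s j)^-1 * tnth r i).
  by move=> i; have [j [hj _]] := hs (tnth r i); exists j.
case/fin_all_exists=> phi hphi.
have inj : injective phi.
  move=> i i' e.
  have h1 : H ((tnth r i)^-1 * tnth r i') by
    apply: (sgHcomb sH _ _ _ (hphi i)); rewrite e; apply: hphi.
  have [k [_ uk]] := hr (tnth r i').
  rewrite -(uk i) //; apply: uk; by rewrite mulVg; apply: sgH1.
by have := leq_card phi inj; rewrite !card_ord.
Qed.

Lemma index_uniq {H n m} : is_subgroup H ->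
  has_index H n -> has_index H m -> n = m.
Proof.
move=> sH hn hm; apply/eqP; rewrite eqn_leq.
by rewrite (index_le sH hn hm) (index_le sH hm hn).
Qed.


Lemma morphV (Q : finGroupType) (f : G -> Q) : monoid_morphism f ->
  forall x, f x^-1 = (f x)^-1.
Proof.
move=> [f1 fM] x; apply/esym/mulg1_eq; by rewrite -fM mulgV f1.
Qed.

Lemma L1 (Q : finGroupType) (f : G -> Q) : monoid_morphism f ->
  (forall q : Q, exists g : G, f g = q) ->
  forall K : {group Q}, has_index (fun g => is_true (f g \in K)) #|[set: Q] : K|.
Proof.
move=> mf sf K.
have [lift hlift] := fin_all_exists (fun C : {set Q} => sf (repr C)).
set Cs := lcosets K [set: Q].
have E : #|Cs| = #|[set: Q] : K| by rewrite card_lcosets.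
exists [tuple lift (enum_val (cast_ord (esym E) i)) | i < #|[set: Q] : K|].
have reprC : forall C, C \in Cs -> repr C *: K = C.
  move=> C /imsetP[a _ ->]; rewrite lcosetE; apply/lcoset_eqP.
  by apply: mem_repr (lcoset_refl K a).
have key : forall C y, C \in Cs -> ((repr C)^-1 * y \in K) = (C == y *: K).
  move=> C y CC; rewrite -mem_lcoset (reprC C CC).
  apply/idP/eqP => [yC | ->]; last exact: lcoset_refl.
  have [a _ Ca] := imsetP CC; rewrite Ca lcosetE in yC *.
  by apply/esym/lcoset_eqP.
move=> x.
have Cx : f x *: K \in Cs by rewrite -lcosetE; apply: imset_f; rewrite inE.
exists (cast_ord E (enum_rank_in Cx (f x *: K))). rewrite /unique.
split.
  rewrite /= tnth_mktuple (snd mf) morphV // hlift key ?enum_valP //.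
  by rewrite cast_ordK enum_rankK_in.
move=> i /=; rewrite tnth_mktuple (snd mf) morphV // hlift key ?enum_valP // => /eqP hi.
apply: (@cast_ord_inj _ _ (esym E)); rewrite cast_ordK.
apply: enum_val_inj; by rewrite hi enum_rankK_in.
Qed.

Lemma perm_rep {H n} : is_subgroup H -> has_index H n ->
  exists (Q : finGroupType) (f : G -> Q) (K : {group Q}),
    [/\ monoid_morphism f, (forall q, exists g, f g = q) & forall g, H g <-> f g \in K].
Proof.
move=> sH [r hr].
pose idx x := proj1_sig (constructive_indefinite_description _ (hr x)).
have idxS x : H ((tnth r (idx x))^-1 * x) /\ forall j, H ((tnth r j)^-1 * x) -> idx x = j.
  by rewrite /idx; case: constructive_indefinite_description.
have idxP x : H ((tnth r (idx x))^-1 * x) by case: (idxS x).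
have idx_eq x j : H ((tnth r j)^-1 * x) -> idx x = j by case: (idxS x) => _; apply.
pose act g i := idx (g^-1 * tnth r i).
have actM g h i : act (g * h) i = act h (act g i).
  rewrite /act; apply: idx_eq.
  have := sgHM sH (idxP (h^-1 * tnth r (idx (g^-1 * tnth r i)))) (idxP (g^-1 * tnth r i)).
  by rewrite invMg !mulgA mulgK.
have act1 i : act 1 i = i.
  by rewrite /act; apply: idx_eq; rewrite invg1 mul1g mulVg; apply: sgH1.
have actK g : cancel (act g) (act g^-1).
  by move=> i; rewrite -actM mulgV act1.
pose f g : {perm 'I_n} := perm (can_inj (actK g)).
have fM : monoid_morphism f.
  split.
    by apply/permP => i; rewrite permE perm1 act1.
  by move=> g h; apply/permP => i; rewrite permM !permE actM.
pose S := [set p : {perm 'I_n} | pb (exists g, f g = p)].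
have gS : group_set S.
  apply/group_setP; split.
    by rewrite inE; apply/pbP; exists 1; rewrite (fst fM).
  move=> p q; rewrite !inE => /pbP[a <-] /pbP[b <-]; apply/pbP.
  by exists (a * b); rewrite (snd fM).
pose ImG := Group gS.
have fIm g : f g \in ImG by rewrite inE; apply/pbP; exists g.
pose F g : subg_of ImG := subg ImG (f g).
pose i0 := idx 1.
pose Ks := [set u : subg_of ImG | sgval u i0 == i0].
have gK : group_set Ks.
  apply/group_setP; split.
    by rewrite inE /= perm1.
  move=> u v; rewrite !inE => /eqP hu /eqP hv.
  by rewrite /= permM hu hv.
exists (subg_of ImG), F, (Group gK); split.
- split.
    by apply: subg_inj; rewrite subgK ?(fst fM) //.
  by move=> g h; rewrite /F (snd fM) subgM.
- move=> q; have := subgP q; rewrite inE => /pbP[g hg].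
  by exists g; rewrite /F hg sgvalK.
move=> g; rewrite inE /F subgK // permE /act.
have Hr : H (tnth r i0)^-1 by have := idxP 1; rewrite mulg1.
have Hr' : H (tnth r i0) by rewrite -[tnth r i0]invgK; apply: sgHV.
split => [Hg | /eqP e].
  apply/eqP; apply: idx_eq.
  rewrite mulgA; apply: sgHM => //; apply: sgHM => //; exact: sgHV.
have := idxP (g^-1 * tnth r i0); rewrite e => h.
have : H (tnth r i0 * ((tnth r i0)^-1 * (g^-1 * tnth r i0)) * (tnth r i0)^-1).
  by apply: sgHM => //; apply: sgHM.
rewrite mulVKg mulgK => /(sgHV sH); by rewrite invgK.
Qed.


Section Morph.
Variables (Q : finGroupType) (f : G -> Q).
Hypothesis mf : monoid_morphism f.

Lemma fmorphX x n : f (x ^+ n) = (f x) ^+ n.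
Proof.
elim: n => [|n IH]; first by rewrite !expg0 (fst mf).
by rewrite !expgS (snd mf) IH.
Qed.

Lemma fmorphJ x y : f (x ^ y) = f x ^ f y.
Proof. by rewrite /conjg !(snd mf) (@morphV Q f mf). Qed.

Lemma pre_sub (K : {group Q}) : is_subgroup (fun g => is_true (f g \in K)).
Proof.
split; first by rewrite (fst mf) group1.
split; first by move=> x y hx hy; rewrite (snd mf) groupM.
by move=> x hx; rewrite (@morphV Q f mf) groupV.
Qed.

Lemma pull (L : {group Q}) : L <|<| [set: Q] -> subnormal_in (fun g => is_true (f g \in L)).
Proof.
have : forall n (L : {group Q}), #|[set: Q]| - #|L| <= n -> L <|<| [set: Q] ->
   subnormal_in (fun g => is_true (f g \in L)); last by apply; apply: leqnn.
elim => [|n IH] {}L hL snL; case: (subnormalEl snL) => [eL | [M [nLM snM prLM]]].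
- by apply: subnormal_top; [apply: pre_sub | move=> x; rewrite eL inE].
- have h1 : #|L| < #|M| := proper_card prLM.
  have h2 : #|M| <= #|[set: Q]| := subset_leq_card (subsetT M); lia.
- by apply: subnormal_top; [apply: pre_sub | move=> x; rewrite eL inE].
apply: (subnormal_step (K := fun g => is_true (f g \in M))); last first.
  apply: IH => //.
  have h1 : #|L| < #|M| := proper_card prLM.
  have h2 : #|M| <= #|[set: Q]| := subset_leq_card (subsetT M); lia.
split; first exact: pre_sub.
split; first exact: pre_sub.
split; first by move=> x hx; apply: (subsetP (normal_sub nLM)).
move=> x y hx hy; rewrite fmorphJ memJ_norm //.
exact: (subsetP (normal_norm nLM)).
Qed.

Hypothesis sf : forall q : Q, exists g : G, f g = q.

Lemma img_group_set {K : G -> Prop} : is_subgroup K ->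
  group_set [set q | pb (exists g, K g /\ f g = q)].
Proof.
move=> sK; apply/group_setP; split.
  by rewrite inE; apply/pbP; exists 1; split; [apply: sgH1 | rewrite (fst mf)].
move=> p q; rewrite !inE => /pbP[a [Ka <-]] /pbP[b [Kb <-]]; apply/pbP.
by exists (a * b); split; [apply: sgHM | rewrite (snd mf)].
Qed.

Lemma push (P : G -> Prop) : subnormal_in P -> forall (L : {group Q}),
  (forall q, q \in L <-> exists g, P g /\ f g = q) -> L <|<| [set: Q].
Proof.
elim => {P} [P sP hP | P K nPK snK IH] L hL.
  have eL : (L : {set Q}) = [set: Q].
    apply/setP => q; rewrite inE; apply/hL; have [g <-] := sf q; by exists g.
  by rewrite eL; apply: subnormal_refl.
case: nPK => sP [sK [sPK cPK]].
pose ImK := Group (img_group_set sK).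
have snI : ImK <|<| [set: Q].
  apply: IH => q; rewrite inE; split; [by move/pbP | by move=> h; apply/pbP].
apply: subnormal_trans snI; apply: normal_subnormal.
rewrite /normal; apply/andP; split.
  apply/subsetP => q /hL [g [Pg <-]]; rewrite inE; apply/pbP; exists g; split => //.
  exact: sPK.
apply/subsetP => q'; rewrite inE => /pbP[k [Kk <-]]; rewrite inE.
apply/subsetP => w /imsetP[q /hL [p [Pp <-]] ->].
apply/hL; exists (p ^ k); split; first exact: cPK.
exact: fmorphJ.
Qed.

End Morph.

End Abs.
Arguments L1 {G Q f}.
Arguments morphV {G Q f}.
Arguments pre_sub {G Q f}.
Arguments pull {G Q f}.
Arguments push {G Q f}.
Arguments fmorphX {G Q f}.
Arguments fmorphJ {G Q f}.

Theorem proposition5p6 (G : groupType) :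
  let A := forall x : G, in_S x in
  let B := forall H : G -> Prop, finite_index H -> exponential H in
  let C := forall (Q : finGroupType) (f : G -> Q),
             monoid_morphism f -> (forall q : Q, exists g : G, f g = q) ->
             nilpotent [set: Q] in
  let D := forall H : G -> Prop, finite_index H -> subnormal_in H in
  (A <-> B) /\ (B <-> C) /\ (C <-> D).
Proof.
move=> A B C D.
have AB : A <-> B.
  split => [hA H [sH [n hn]] | hB x H n sH hn].
    by split; [split => //; exists n | move=> m hm x; exact: hA x H m sH hm].
  by have [_ e] := hB H (conj sH (ex_intro _ n hn)); apply: e.
have BC : B -> C.
  move=> hB Q f mf sf; apply: (@F1 Q [set: Q]%G) => K _ q _.
  have [g <-] := sf q.
  have [_ e] := hB _ (conj (pre_sub mf K) (ex_intro _ _ (L1 mf sf K))).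
  rewrite -fmorphX //; exact: e (L1 mf sf K) g.
have DC : D -> C.
  move=> hD Q f mf sf; apply: (@F1 Q [set: Q]%G) => K _ q _.
  have snP := hD _ (conj (pre_sub mf K) (ex_intro _ _ (L1 mf sf K))).
  have snK : K <|<| [set: Q].
    apply: (push mf sf _ snP) => q'; split.
      by move=> hq; have [g hg] := sf q'; exists g; rewrite hg.
    by case=> g [h <-].
  by apply: F5 snK _ _; rewrite inE.
have CB : C -> B.
  move=> hC H [sH [n hn]]; split; first by split => //; exists n.
  move=> m hm x.
  have [Q [f [K [mf sf eK]]]] := perm_rep sH hn.
  have snK := nilpotent_subnormal (hC Q f mf sf) (subsetT K).
  have hiH : has_index H #|[set: Q] : K|.
    case: (L1 mf sf K) => reps hr; exists reps => y.
    have [i [hi1 hi2]] := hr y; exists i; split; first by apply/eK.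
    by move=> j /eK; apply: hi2.
  rewrite (index_uniq sH hm hiH); apply/eK; rewrite fmorphX //.
  by apply: F5 snK _ _; rewrite inE.
have CD : C -> D.
  move=> hC H [sH [n hn]].
  have [Q [f [K [mf sf eK]]]] := perm_rep sH hn.
  have snK := nilpotent_subnormal (hC Q f mf sf) (subsetT K).
  have -> : H = (fun g => is_true (f g \in K)).
    by apply: functional_extensionality => g; apply: propositional_extensionality; exact: eK.
  exact: pull mf _ snK.
by split; [exact: AB | split; split].
Qed.
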